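(* For all $n \geq 0$: $$\sum_{k:\, a(k) \leq n} a(k) = \begin{cases} \frac{n^2}{4} - \frac{n}{4} + n\,t(n) & \text{if } n \equiv 0 \pmod 4,\\ \frac{n^2}{4} + \frac{n}{4} - \frac12 + t(n) & \text{if } n \equiv 1 \pmod 4,\\ \frac{n^2}{4} - \frac{n}{4} - \frac12 + (n+1)t(n) & \text{if } n \equiv 2 \pmod 4,\\ \frac{n^2}{4} + \frac{n}{4} & \text{if } n \equiv 3 \pmod 4,\end{cases}$$ $$\sum_{k:\, b(k) \leq n} b(k) = \begin{cases} \frac{n^2}{4} + \frac{3n}{4} - n\,t(n) & \text{if } n \equiv 0 \pmod 4,\\ \frac{n^2}{4} + \frac{n}{4} + \frac12 - t(n) & \text{if } n \equiv 1 \pmod 4,\\ \frac{n^2}{4} + \frac{3n}{4} + \frac12 - (n+1)t(n) & \text{if } n \equiv 2 \pmod 4,\\ \frac{n^2}{4} + \frac{n}{4} & \text{if } n \equiv 3 \pmod 4.\end{cases}$$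
   Context: The Thue–Morse sequence $(t(n))_{n\geq 0}$ is defined by $t(0)=0$, $t(2n)=t(n)$, $t(2n+1)=1-t(n)$. A nonnegative integer is odious if the sum of its binary digits is odd and evil if it is even. $(a(n))_{n\geq0}$ is the increasing sequence of odious numbers and $(b(n))_{n\geq 0}$ the increasing sequence of evil numbers, both indexed from $0$ (so $a(0)=1, a(1)=2,\ldots$ and $b(0)=0, b(1)=3, \ldots$). *)

(* Defs.v *)
From mathcomp Require Import all_boot all_order all_algebra.
Set Implicit Arguments. Unset Strict Implicit. Unset Printing Implicit Defensive.

Fixpoint digsum_aux (fuel n : nat) : nat :=
  match fuel with
  | 0 => 0
  | f.+1 => if n is 0 then 0 else odd n + digsum_aux f n./2
  end.
Definition digsum (n : nat) : nat := digsum_aux n n.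

(* Thue--Morse: t(0)=0, t(2n)=t(n), t(2n+1)=1-t(n)
   (structural recursion with fuel n >= number of binary digits). *)
Fixpoint tm_aux (fuel n : nat) : nat :=
  match fuel with
  | 0 => 0
  | f.+1 => if n is 0 then 0
            else if odd n then 1 - tm_aux f n./2 else tm_aux f n./2
  end.
Definition tm (n : nat) : nat := tm_aux n n.

Definition odious (n : nat) : bool := odd (digsum n).
Definition evil (n : nat) : bool := ~~ odd (digsum n).

(* The increasing enumeration (from index 0) of the numbers satisfying P,
   assuming at least k+1 of them lie below 2k+2 (true for odious/evil). *)
Definition enum_inc (P : pred nat) (k : nat) : nat :=
  nth 0 [seq m <- iota 0 (2 * k + 2) | P m] k.

Definition a (k : nat) : nat := enum_inc odious k.
Definition b (k : nat) : nat := enum_inc evil k.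

(* Main.v *)
Require Import Defs.
From mathcomp Require Import all_boot all_order all_algebra.
From mathcomp Require Import zify ring lra.
Import GRing.Theory Num.Theory.

Lemma tm_aux_S f n : tm_aux f.+1 n =
  if n is 0 then 0 else if odd n then 1 - tm_aux f n./2 else tm_aux f n./2.
Proof. by []. Qed.

Lemma half_le f n : (n <= f.+1)%N -> (n./2 <= f)%N.
Proof. move=> h; rewrite leq_half_double -addnn; lia. Qed.

Lemma tm_aux_fuel f g n : (n <= f)%N -> (n <= g)%N -> tm_aux f n = tm_aux g n.
Proof.
elim: f g n => [|f IH] g n.
  by rewrite leqn0 => /eqP -> _; case: g.
case: g => [|g]; first by rewrite leqn0 => _ /eqP ->.
move=> hf hg; rewrite !tm_aux_S; case: n hf hg => // n hf hg.
by rewrite (IH g) // half_le.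
Qed.

Lemma tm_aux_le1 f n : (tm_aux f n <= 1)%N.
Proof.
elim: f n => [|f IH] n //; rewrite tm_aux_S; case: n => // n.
by case: ifP => _ //; rewrite leq_subr.
Qed.

Lemma tm_le1 n : (tm n <= 1)%N.
Proof. exact: tm_aux_le1. Qed.

Lemma tm_rec n : (0 < n)%N -> tm n = if odd n then 1 - tm n./2 else tm n./2.
Proof.
case: n => // n _; rewrite /tm tm_aux_S.
by by rewrite (@tm_aux_fuel n n.+1./2 n.+1./2) // half_le.
Qed.

Lemma tm_even k : tm (2 * k) = tm k.
Proof.
case: k => // k; rewrite tm_rec ?muln_gt0 //.
by rewrite mul2n odd_double doubleK.
Qed.

Lemma tm_odd k : tm (2 * k + 1) = 1 - tm k.
Proof.
rewrite tm_rec; last by rewrite addn1.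
by rewrite mul2n addn1 oddS odd_double -uphalfE uphalf_double.
Qed.

Lemma odd_ds f n : odd (digsum_aux f n) = (tm_aux f n == 1).
Proof.
elim: f n => [|f IH] n //; rewrite tm_aux_S; case: n => // n.
rewrite [digsum_aux _ _]/= oddD IH.
have := tm_aux_le1 f n.+1./2; case: (tm_aux f _) => [|[|]] // _; rewrite ?oddS; by case: (odd n).
Qed.

Lemma odiousE m : odious m = (tm m == 1).
Proof. exact: odd_ds. Qed.

Lemma evilE m : evil m = (tm m == 0).
Proof.
rewrite /evil odd_ds -/(tm m); have := tm_le1 m; by case: (tm m) => [|[|]].
Qed.

Section Gen.
Variable P : pred nat.
Hypothesis hP : forall j, P (2 * j + 1) = ~~ P (2 * j).

Definition c j := if P (2 * j) then 2 * j else 2 * j + 1.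

Lemma filter_iota k : [seq m <- iota 0 (2 * k) | P m] = mkseq c k.
Proof.
elim: k => // k IH.
rewrite mulnS addnC iotaD filter_cat IH mkseqS -cats1 add0n; congr (_ ++ _).
rewrite /= -[(2 * k).+1]addn1 hP /c; by case: (P (2 * k)).
Qed.

Lemma enum_c k : enum_inc P k = c k.
Proof.
by rewrite /enum_inc (_ : 2 * k + 2 = 2 * k.+1)%N ?filter_iota ?nth_mkseq //; lia.
Qed.

Lemma delta N j x : (\sum_(0 <= k < N) (if k == j then x else 0) =
   if (j < N) then x else 0)%N.
Proof.
elim: N => [|N IH]; first by rewrite big_geq.
rewrite big_nat_recr // IH.
case: (eqVneq N j) => [<-|ne]; first by rewrite ltnn leqnn.
rewrite [in RHS]ltnS [in RHS]leq_eqVlt eq_sym (negbTE ne) /=; exact: addn0.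
Qed.

Lemma sum_eq N m : (m < 2 * N)%N ->
  (\sum_(0 <= k < N) (if c k == m then m else 0) = if P m then m else 0)%N.
Proof.
move=> hm.
have [j [e|e]] : exists j, m = 2 * j \/ m = 2 * j + 1.
  exists m./2; have := odd_double_half m; rewrite -mul2n.
  by case: (odd m) => /= e; [right|left]; lia.
all: rewrite e in hm *.
- rewrite (eq_bigr (fun k => if k == j then (if P (2 * j) then 2 * j else 0) else 0)).
    by rewrite delta ifT //; lia.
  move=> k _; rewrite /c.
  case: (eqVneq k j) => [->|ne]; first by case: (P (2 * j)); rewrite ?eqxx // ?ifF //; apply/negbTE/eqP; lia.
  case: (P (2 * k)); rewrite ifF //; apply/negbTE/eqP; move/eqP: ne; lia.
- rewrite (eq_bigr (fun k => if k == j then (if P (2 * j + 1) then 2 * j + 1 else 0) else 0)).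
    by rewrite delta ifT //; lia.
  move=> k _; rewrite /c hP.
  case: (eqVneq k j) => [->|ne]; first by case: (P (2 * j)); rewrite ?eqxx // ?ifF //; apply/negbTE/eqP; lia.
  case: (P (2 * k)); rewrite ifF //; apply/negbTE/eqP; move/eqP: ne; lia.
Qed.

Definition SP n := (\sum_(0 <= k < n.+1 | c k <= n) c k)%N.

Lemma c_ge k : (2 * k <= c k)%N.
Proof. by rewrite /c; case: ifP => _ //; rewrite leq_addr. Qed.

Lemma step_if x n : ((if x <= n.+1 then x else 0) =
   (if x <= n then x else 0) + (if x == n.+1 then n.+1 else 0))%N.
Proof.
case: (eqVneq x n.+1) => [->|ne]; first by rewrite leqnn ltnn.
by rewrite leq_eqVlt (negbTE ne) /= ltnS addn0.
Qed.

Lemma SP_succ n : SP n.+1 = (SP n + if P n.+1 then n.+1 else 0)%N.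
Proof.
rewrite /SP !big_mkcond big_nat_recr //=.
rewrite [X in (_ + X)%N]ifF; last first.
  apply/negbTE; rewrite -ltnNge; have := c_ge n.+1; lia.
rewrite addn0 (eq_bigr _ (fun k _ => step_if (c k) n)) big_split /=.
rewrite sum_eq; first by rewrite [in RHS]big_mkcond.
lia.
Qed.

Lemma SP0 : SP 0 = 0%N.
Proof. rewrite /SP big_mkcond big_nat1; by case: leqP => //; rewrite leqn0 => /eqP. Qed.

End Gen.
Local Open Scope ring_scope.

Lemma tm4_0 q : tm (q * 4) = tm q.
Proof. by rewrite (_ : q * 4 = 2 * (2 * q))%N ?tm_even //; lia. Qed.
Lemma tm4_1 q : tm (q * 4 + 1) = (1 - tm q)%N.
Proof. by rewrite (_ : q * 4 = 2 * (2 * q))%N ?tm_odd ?tm_even //; lia. Qed.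
Lemma tm4_2 q : tm (q * 4 + 2) = (1 - tm q)%N.
Proof. by rewrite (_ : q * 4 + 2 = 2 * (2 * q + 1))%N ?tm_even ?tm_odd //; lia. Qed.
Lemma tm4_3 q : tm (q * 4 + 3) = (1 - (1 - tm q))%N.
Proof. by rewrite (_ : q * 4 + 3 = 2 * (2 * q + 1) + 1)%N ?tm_odd ?tm_even //; lia. Qed.

Definition FA (n : nat) : rat :=
  let N : rat := n%:R in
  let T : rat := (tm n)%:R in
     if (n %% 4 == 0)%N then N ^+ 2 / 4 - N / 4 + N * T
     else if (n %% 4 == 1)%N then N ^+ 2 / 4 + N / 4 - 1 / 2 + T
     else if (n %% 4 == 2)%N then N ^+ 2 / 4 - N / 4 - 1 / 2 + (N + 1) * T
     else N ^+ 2 / 4 + N / 4.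

Lemma FA_step n : FA n.+1 = FA n + (if tm n.+1 == 1 then n.+1 else 0)%N%:R.
Proof.
suff H : forall q r, (r < 4)%N -> FA (q * 4 + r).+1 = FA (q * 4 + r) +
   (if tm (q * 4 + r).+1 == 1 then (q * 4 + r).+1 else 0)%N%:R.
  by rewrite (divn_eq n 4); apply: H; rewrite ltn_mod.
move=> q [|[|[|[|r]]]] // _; rewrite /FA -!addnS ?addn0 !modnMDl ?modnMl /=.
all: rewrite ?tm4_0 ?tm4_1 ?tm4_2 ?tm4_3.
all: have := tm_le1 q; case: (tm q) => [|[|]] // _.
all: have := tm_le1 (q * 4 + 4); case: (tm (q * 4 + 4)) => [|[|]] // _.
all: rewrite ?subn0 ?subnn /= ?natrD ?natrM /=.
all: field. all: by [].
Qed.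

Definition FB (n : nat) : rat :=
  let N : rat := n%:R in
  let T : rat := (tm n)%:R in
     if (n %% 4 == 0)%N then N ^+ 2 / 4 + 3 * N / 4 - N * T
     else if (n %% 4 == 1)%N then N ^+ 2 / 4 + N / 4 + 1 / 2 - T
     else if (n %% 4 == 2)%N then N ^+ 2 / 4 + 3 * N / 4 + 1 / 2 - (N + 1) * T
     else N ^+ 2 / 4 + N / 4.

Lemma FB_step n : FB n.+1 = FB n + (if tm n.+1 == 0 then n.+1 else 0)%N%:R.
Proof.
suff H : forall q r, (r < 4)%N -> FB (q * 4 + r).+1 = FB (q * 4 + r) +
   (if tm (q * 4 + r).+1 == 0 then (q * 4 + r).+1 else 0)%N%:R.
  by rewrite (divn_eq n 4); apply: H; rewrite ltn_mod.
move=> q [|[|[|[|r]]]] // _; rewrite /FB -!addnS ?addn0 !modnMDl ?modnMl /=.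
all: rewrite ?tm4_0 ?tm4_1 ?tm4_2 ?tm4_3.
all: have := tm_le1 q; case: (tm q) => [|[|]] // _.
all: have := tm_le1 (q * 4 + 4); case: (tm (q * 4 + 4)) => [|[|]] // _.
all: rewrite ?subn0 ?subnn /= ?natrD ?natrM /=.
all: field. all: by [].
Qed.

Lemma hodious j : odious (2 * j + 1) = ~~ odious (2 * j).
Proof. rewrite !odiousE tm_odd tm_even; have := tm_le1 j; by case: (tm j) => [|[|]]. Qed.
Lemma hevil j : evil (2 * j + 1) = ~~ evil (2 * j).
Proof. rewrite !evilE tm_odd tm_even; have := tm_le1 j; by case: (tm j) => [|[|]]. Qed.

Lemma SA_F n : (SP odious n)%:R = FA n.
Proof.
elim: n => [|n IH]; first by rewrite SP0 /FA /=; field.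
by rewrite (@SP_succ odious hodious n) natrD IH FA_step odiousE.
Qed.

Lemma SB_F n : (SP evil n)%:R = FB n.
Proof.
elim: n => [|n IH]; first by rewrite SP0 /FB /=; field.
by rewrite (@SP_succ evil hevil n) natrD IH FB_step evilE.
Qed.

Theorem corollary2 (n : nat) :
  let N : rat := n%:R in
  let T : rat := (tm n)%:R in
  ((\sum_(0 <= k < n.+1 | (a k <= n)%N) (a k)%:R : rat) =
     if (n %% 4 == 0)%N then N ^+ 2 / 4 - N / 4 + N * T
     else if (n %% 4 == 1)%N then N ^+ 2 / 4 + N / 4 - 1 / 2 + T
     else if (n %% 4 == 2)%N then N ^+ 2 / 4 - N / 4 - 1 / 2 + (N + 1) * T
     else N ^+ 2 / 4 + N / 4)
  /\
  ((\sum_(0 <= k < n.+1 | (b k <= n)%N) (b k)%:R : rat) =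
     if (n %% 4 == 0)%N then N ^+ 2 / 4 + 3 * N / 4 - N * T
     else if (n %% 4 == 1)%N then N ^+ 2 / 4 + N / 4 + 1 / 2 - T
     else if (n %% 4 == 2)%N then N ^+ 2 / 4 + 3 * N / 4 + 1 / 2 - (N + 1) * T
     else N ^+ 2 / 4 + N / 4).
Proof.
split.
- rewrite -[RHS]/(FA n) -SA_F /SP natr_sum.
  by apply: eq_big => k; rewrite /a (@enum_c odious hodious).
- rewrite -[RHS]/(FB n) -SB_F /SP natr_sum.
  by apply: eq_big => k; rewrite /b (@enum_c evil hevil).
Qed.
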